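(* Let $d\ge 2$ and let $\Lambda=\{\lambda_S:\emptyset\ne S\subseteq\mathbb{I}_d\}$ with all $\lambda_S>0$. If the survival copula of a random vector $\boldsymbol Z\in\mathbb{R}^d$ is the generalized Marshall–Olkin survival copula $\widehat C^{\mathrm{MO}(\Lambda)}$, then $\boldsymbol Z$ is mutually asymptotically independent.
   Context: Write $\mathbb{I}_d=\{1,\dots,d\}$. The generalized Marshall–Olkin survival copula with rate parameter $\Lambda$ is $\widehat C^{\mathrm{MO}(\Lambda)}(u_1,\dots,u_d)=\prod_{i=1}^d\prod_{S\subseteq\mathbb{I}_d,\,|S|=i}\ \min_{j\in S}u_j^{\eta_j^S}$ for $u_j\in[0,1]$, where $\eta_j^S=\lambda_S/\sum_{J\subseteq\mathbb{I}_d,\,J\ni j}\lambda_J$ for $j\in S$. For a survival copula $\widehat C$ and nonempty $S\subseteq\mathbb{I}_d$, $\widehat C_S$ denotes $\widehat C$ with the arguments outside $S$ set to $1$ (so $\widehat C_S(u)=u$ if $|S|=1$). A random vector with survival copula $\widehat C$ is mutually asymptotically independent if for every $S\subseteq\mathbb{I}_d$ with $|S|\ge2$ and every $\ell\in S$, $\lim_{u\downarrow0}\widehat C_S(u,\dots,u)/\widehat C_{S\setminus\{\ell\}}(u,\dots,u)=0$, with $0/0:=0$. *)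

(* Defs.v *)
From mathcomp Require Import all_boot all_order all_algebra.
From mathcomp Require Import all_classical all_reals all_analysis.
Set Implicit Arguments. Unset Strict Implicit. Unset Printing Implicit Defensive.
Import Order.TTheory GRing.Theory Num.Theory.
Import numFieldNormedType.Exports.
Local Open Scope ring_scope.
Local Open Scope classical_set_scope.

Definition MO_eta (R : realType) (d : nat) (lam : {set 'I_d} -> R)
  (j : 'I_d) (S : {set 'I_d}) : R :=
  lam S / \sum_(J : {set 'I_d} | j \in J) lam J.

Definition MO_survival_copula (R : realType) (d : nat) (lam : {set 'I_d} -> R)
  (u : 'I_d -> R) : R :=
  \prod_(1 <= i < d.+1)
    \prod_(S : {set 'I_d} | #|S| == i)
      \big[Order.min/1]_(j in S) (u j `^ MO_eta lam j S).

(* C_S(t,...,t): arguments outside S set to 1, arguments in S set to t *)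
Definition copula_margin_diag (R : realType) (d : nat)
  (C : ('I_d -> R) -> R) (S : {set 'I_d}) (t : R) : R :=
  C (fun j => if j \in S then t else 1).

(* Mutual asymptotic independence, expressed via the survival copula.
   (Division by 0 is 0 in MathComp, matching the convention 0/0 := 0.) *)
Definition mutually_asymptotically_independent (R : realType) (d : nat)
  (C : ('I_d -> R) -> R) : Prop :=
  forall (S : {set 'I_d}), (2 <= #|S|)%N -> forall l : 'I_d, l \in S ->
    (fun t : R => copula_margin_diag C S t / copula_margin_diag C (S :\ l) t)
      @ 0^'+ --> (0 : R).

(* Main.v *)
Require Import Defs.
From mathcomp Require Import all_boot all_order all_algebra.
From mathcomp Require Import all_classical all_reals all_analysis.
Import Order.TTheory GRing.Theory Num.Theory.
Import numFieldNormedType.Exports.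
Local Open Scope ring_scope.

Section Aux.
Variables (R : realType) (d : nat) (lam : {set 'I_d} -> R).
Implicit Types (X Y A S : {set 'I_d}) (t : R) (l j : 'I_d).
Hypothesis lam_pos : forall S : {set 'I_d}, (0 < #|S|)%N -> 0 < lam S.

Lemma eta_gt0 (j : 'I_d) (S : {set 'I_d}) : j \in S -> 0 < MO_eta lam j S.
Proof.
move=> jS; rewrite /MO_eta divr_gt0 //.
  by apply: lam_pos; apply/card_gt0P; exists j.
rewrite (bigD1 [set j]) /=; last by rewrite set11.
rewrite ltr_pwDl //; first by apply: lam_pos; rewrite cards1.
apply: sumr_ge0 => J /andP[jJ _]; apply/ltW/lam_pos/card_gt0P; by exists j.
Qed.

Definition Fx (X : {set 'I_d}) (t : R) (S : {set 'I_d}) : R :=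
  \big[Order.min/1]_(j in S) ((if j \in X then t else 1) `^ MO_eta lam j S).

Lemma Fx_ge0 X t S : 0 <= Fx X t S.
Proof.
rewrite /Fx; apply: (big_ind (fun x : R => 0 <= x)) => //.
  by move=> x y; rewrite le_min => -> ->.
by move=> i _; exact: powR_ge0.
Qed.

Lemma Fx_gt0 X t S : 0 < t -> 0 < Fx X t S.
Proof.
move=> t0; rewrite /Fx; apply: (big_ind (fun x : R => 0 < x)) => //.
  by move=> x y; rewrite lt_min => -> ->.
by move=> i _; apply: powR_gt0; case: ifP.
Qed.

Lemma Fx_mono X Y t S : 0 <= t <= 1 -> X \subset Y -> Fx Y t S <= Fx X t S.
Proof.
move=> /andP[t0 t1] XY; rewrite /Fx.
apply: (big_ind2 (fun x y : R => x <= y)) => //.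
  by move=> x1 x2 y1 y2 h1 h2; exact: le_min2.
move=> j jS; apply: ge0_ler_powR; first exact/ltW/eta_gt0.
- by rewrite nnegrE; case: ifP.
- by rewrite nnegrE; case: ifP.
case: ifP => jY; case: ifP => jX //.
by have := fintype.subsetP XY j; rewrite jX jY => /(_ isT).
Qed.

Definition Px (X : {set 'I_d}) t :=
  \prod_(1 <= i < d.+1) \prod_(S : {set 'I_d} | #|S| == i) Fx X t S.

Lemma PxE (X : {set 'I_d}) (t : R) : copula_margin_diag (MO_survival_copula lam) X t = Px X t.
Proof. by []. Qed.

Lemma Px_gt0 X t : 0 < t -> 0 < Px X t.
Proof.
move=> t0; apply: prodr_gt0 => i _; apply: prodr_gt0 => S _; exact: Fx_gt0.
Qed.

Lemma Px_bound A l t : (1 <= d)%N -> l \in A -> 0 < t <= 1 ->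
  Px A t <= t `^ MO_eta lam l [set l] * Px (A :\ l) t.
Proof.
move=> d1 lA /andP[t0 t1].
have t01 : 0 <= t <= 1 by rewrite (ltW t0).
have sub : A :\ l \subset A by exact: subsetDl.
rewrite /Px big_ltn // [X in _ <= _ * X]big_ltn // mulrA.
apply: ler_pM.
- apply: prodr_ge0 => S _; exact: Fx_ge0.
- apply: prodr_ge0 => i _; apply: prodr_ge0 => S _; exact: Fx_ge0.
- rewrite (bigD1 [set l]) ?cards1 //= [X in _ <= _ * X](bigD1 [set l]) ?cards1 //=.
  rewrite mulrA; apply: ler_pM.
  + exact: Fx_ge0.
  + apply: prodr_ge0 => S _; exact: Fx_ge0.
  + rewrite /Fx !big_set1E lA !inE eqxx /= powR1 minxx mulr1 ge_min lexx.
    done.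
  + apply: ler_prod => S _; rewrite Fx_ge0; exact: Fx_mono.
- apply: ler_prod => i _; rewrite prodr_ge0 /=; last by move=> S _; exact: Fx_ge0.
  apply: ler_prod => S _; rewrite Fx_ge0; exact: Fx_mono.
Qed.

End Aux.

Theorem mainTheorem3 (R : realType) (d : nat) (lam : {set 'I_d} -> R) :
  (2 <= d)%N ->
  (forall S : {set 'I_d}, (0 < #|S|)%N -> 0 < lam S) ->
  mutually_asymptotically_independent (MO_survival_copula lam).
Proof.
move=> d2 lpos S _ l lS.
have d1 : (1 <= d)%N by apply: leq_trans d2.
set c := MO_eta lam l [set l].
have c0 : 0 < c by apply: eta_gt0 => //; rewrite set11.
apply: (@squeeze_cvgr _ _ _ _ (fun=> 0) (fun t => t `^ c)).
- near=> t.
  have t0 : 0 < t by near: t; exact: nbhs_right_gt.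
  have t1 : t <= 1 by near: t; exact: nbhs_right_le.
  rewrite !PxE; apply/andP; split.
    by rewrite divr_ge0 // ltW // Px_gt0.
  rewrite ler_pdivrMr ?Px_gt0 //; apply: Px_bound => //.
  by rewrite t0 t1.
- exact: cvg_cst.
- exact: powR_cvg0.
Unshelve. all: end_near.
Qed.
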